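(* Let $\mathbb{F}\in\{\mathbb{R},\mathbb{C}\}$ and $1\le k\leq N<M$. Suppose $\Phi\in\mathcal{P}(M,N)$ and $\Psi\in\mathcal{P}(M,M-N)$ are Naimark complements. Then $\Phi$ maximizes $V_k$ over $\mathcal{P}(M,N)$ if and only if $\Psi$ maximizes $CV_{M-k}$ over $\mathcal{P}(M,M-N)$.
   Context: $\mathcal{P}(M,n)$ is the set of Parseval frames for $\mathbb{F}^n$ with $M$ vectors, i.e. families $\{\varphi_i\}_{i=1}^M\subseteq\mathbb{F}^n$ whose $n\times M$ matrix $\Phi$ satisfies $\Phi\Phi^*=I$. $\Phi\in\mathcal{P}(M,N)$ and $\Psi\in\mathcal{P}(M,M-N)$ are Naimark complements if $\Psi^*\Psi=I-\Phi^*\Phi$. For $K\subseteq[M]$, $\Phi_K$ is the submatrix of columns indexed by $K$. For an $n\times m$ matrix $F$: if $m\le n$, $v_m(F)=\sqrt{\det(F^*F)}$; if $m\ge n$, $cv_m(F)=\sqrt{\det(FF^* )}$. Then $V_k(\Phi)=\sum_{|K|=k}v_k(\Phi_K)$ for $k\le n$, and $CV_k(\Phi)=\sum_{|K|=k}cv_k(\Phi_K)$ for $k\ge n$. *)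

(* Defs.v *)
From HB Require Import structures.
From mathcomp Require Import all_boot all_order all_algebra.
From mathcomp Require Import reals.
From mathcomp Require Import complex.
Set Implicit Arguments. Unset Strict Implicit. Unset Printing Implicit Defensive.
Import Order.TTheory GRing.Theory Num.Theory.
Local Open Scope ring_scope.

(* Generic setting: a scalar field F with a conjugation [conj] (identity for
   F = R, complex conjugation for F = C) and a square root [sq] used to define
   volumes (applied only to nonnegative real scalars). *)
Section Frames.
Variables (F : numFieldType) (conj : F -> F) (sq : F -> F).

Definition adj (m n : nat) (A : 'M[F]_(m, n)) : 'M[F]_(n, m) := map_mx conj A^T.

Definition parseval (n M : nat) (Phi : 'M[F]_(n, M)) : Prop :=
  Phi *m adj Phi = 1%:M.

Definition naimark_compl (N M : nat) (Phi : 'M[F]_(N, M)) (Psi : 'M[F]_(M - N, M))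
  : Prop := adj Psi *m Psi = 1%:M - adj Phi *m Phi.

Definition subcols (n M : nat) (Phi : 'M[F]_(n, M)) (K : {set 'I_M})
  : 'M[F]_(n, #|K|) := colsub (fun i : 'I_#|K| => enum_val i) Phi.

Definition vol (n m : nat) (G : 'M[F]_(n, m)) : F := sq (\det (adj G *m G)).
Definition covol (n m : nat) (G : 'M[F]_(n, m)) : F := sq (\det (G *m adj G)).

(* V_k(Phi) (used for k <= n) and CV_k(Phi) (used for k >= n) *)
Definition Vk (n M k : nat) (Phi : 'M[F]_(n, M)) : F :=
  \sum_(K : {set 'I_M} | #|K| == k) vol (subcols Phi K).
Definition CVk (n M k : nat) (Phi : 'M[F]_(n, M)) : F :=
  \sum_(K : {set 'I_M} | #|K| == k) covol (subcols Phi K).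

Definition maximizes (n M : nat) (f : 'M[F]_(n, M) -> F) (Phi : 'M[F]_(n, M))
  : Prop := parseval Phi /\ forall Phi' : 'M[F]_(n, M), parseval Phi' -> f Phi' <= f Phi.

Definition prop14_for : Prop :=
  forall (k N M : nat), (1 <= k)%N -> (k <= N)%N -> (N < M)%N ->
  forall (Phi : 'M[F]_(N, M)) (Psi : 'M[F]_(M - N, M)),
    parseval Phi -> parseval Psi -> naimark_compl Phi Psi ->
    (maximizes (Vk k) Phi <-> maximizes (CVk (M - k)) Psi).
End Frames.

(* Main.v *)
Require Import Defs.
From HB Require Import structures.
From mathcomp Require Import all_boot all_order all_algebra.
From mathcomp Require Import reals.
From mathcomp Require Import complex.
From mathcomp Require Import zify.
Set Implicit Arguments. Unset Strict Implicit. Unset Printing Implicit Defensive.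
Import Order.TTheory GRing.Theory Num.Theory.
Local Open Scope ring_scope.

Lemma det_sylv (R : comRingType) m n (A : 'M[R]_(m,n)) (B : 'M[R]_(n,m)) :
  \det (1%:M - A *m B) = \det (1%:M - B *m A).
Proof.
have e1 : block_mx 1%:M (-A) 0 1%:M *m block_mx 1%:M A B 1%:M
          = block_mx (1%:M - A *m B) 0 B 1%:M.
  by rewrite mulmx_block !mul1mx !mul0mx mulmx1 add0r add0r addrN mulNmx.
have e2 : block_mx 1%:M 0 (-B) 1%:M *m block_mx 1%:M A B 1%:M
          = block_mx 1%:M A 0 (1%:M - B *m A).
  by rewrite mulmx_block !mul1mx !mul0mx mulmx1 !addr0 mulNmx addNr addrC.
have := congr1 determinant e1; have := congr1 determinant e2.
rewrite !det_mulmx det_ublock det_lblock det_ublock det_lblock !det1 !mul1r !mulr1.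
by move=> -> ->.
Qed.

Section Gen.
Variables (F : numFieldType) (conj : F -> F) (sq : F -> F).
Hypothesis conjD : forall x y, conj (x + y) = conj x + conj y.
Hypothesis conjM : forall x y, conj (x * y) = conj x * conj y.
Hypothesis conjK : forall x, conj (conj x) = x.
Hypothesis conj0 : conj 0 = 0.
Hypothesis conj1 : conj 1 = 1.
Hypothesis conj_ge0 : forall x, 0 <= x * conj x.
Hypothesis conj_eq0 : forall x, x * conj x = 0 -> x = 0.
Hypothesis conj_norm : forall r, 0 < r -> exists c, c * conj c = r.

Notation adj := (@adj F conj).

Lemma conjN x : conj (- x) = - conj x.
Proof. by apply/eqP; rewrite -subr_eq0 opprK -conjD addNr conj0. Qed.

Lemma conj_sum (I : finType) (P : pred I) (f : I -> F) :
  conj (\sum_(i | P i) f i) = \sum_(i | P i) conj (f i).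
Proof. exact: (big_morph conj conjD conj0). Qed.

Lemma adjE m n (A : 'M[F]_(m, n)) i j : adj A i j = conj (A j i).
Proof. by rewrite /Defs.adj !mxE. Qed.

Lemma adjK m n (A : 'M[F]_(m, n)) : adj (adj A) = A.
Proof. by apply/matrixP=> i j; rewrite !adjE conjK. Qed.

Lemma adjM m n p (A : 'M[F]_(m, n)) (B : 'M[F]_(n, p)) :
  adj (A *m B) = adj B *m adj A.
Proof.
apply/matrixP=> i j; rewrite adjE !mxE conj_sum; apply: eq_bigr => k _.
by rewrite conjM !adjE mulrC.
Qed.

Lemma adjD m n (A B : 'M[F]_(m, n)) : adj (A + B) = adj A + adj B.
Proof. by apply/matrixP=> i j; rewrite !adjE !mxE ?adjE conjD. Qed.

Lemma adjN m n (A : 'M[F]_(m, n)) : adj (- A) = - adj A.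
Proof. by apply/matrixP=> i j; rewrite !adjE !mxE ?adjE conjN. Qed.

Lemma adj0 m n : adj (0 : 'M[F]_(m, n)) = 0.
Proof. by apply/matrixP=> i j; rewrite !adjE !mxE ?adjE conj0. Qed.

Lemma adj1 n : adj (1%:M : 'M[F]_n) = 1%:M.
Proof. by apply/matrixP=> i j; rewrite !adjE !mxE ?adjE eq_sym; case: eqP; rewrite ?conj1 ?conj0. Qed.

Lemma adjZ m n c (A : 'M[F]_(m, n)) : adj (c *: A) = conj c *: adj A.
Proof. by apply/matrixP=> i j; rewrite !adjE !mxE ?adjE conjM. Qed.

Lemma adj_col m1 m2 n (A : 'M[F]_(m1, n)) (B : 'M[F]_(m2, n)) :
  adj (col_mx A B) = row_mx (adj A) (adj B).
Proof. by rewrite /Defs.adj tr_col_mx map_row_mx. Qed.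


Lemma subcolsE n M (Phi : 'M[F]_(n,M)) K i j :
  subcols Phi K i j = Phi i (enum_val j).
Proof. by rewrite mxE. Qed.

Lemma key_gram N M (Phi : 'M[F]_(N,M)) (Psi : 'M[F]_(M-N, M)) K :
  naimark_compl conj Phi Psi ->
  adj (subcols Phi K) *m subcols Phi K
    = 1%:M - adj (subcols Psi K) *m subcols Psi K.
Proof.
rewrite /naimark_compl => H; apply/matrixP=> a b.
have := congr1 (fun X : 'M[F]_M => X (enum_val a) (enum_val b)) H.
rewrite !mxE (inj_eq enum_val_inj) => E.
have -> : \sum_j adj (subcols Phi K) a j * subcols Phi K j b
  = \sum_j adj Phi (enum_val a) j * Phi j (enum_val b).
  by apply: eq_bigr => r _; rewrite !adjE !subcolsE.
have -> : \sum_j adj (subcols Psi K) a j * subcols Psi K j b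
  = \sum_j adj Psi (enum_val a) j * Psi j (enum_val b).
  by apply: eq_bigr => r _; rewrite !adjE !subcolsE.
by rewrite E opprB addrC subrK.
Qed.

Lemma key_cogram n M (Psi : 'M[F]_(n, M)) (K : {set 'I_M}) :
  parseval conj Psi ->
  subcols Psi (~: K) *m adj (subcols Psi (~: K))
    = 1%:M - subcols Psi K *m adj (subcols Psi K).
Proof.
rewrite /parseval => H; apply/matrixP=> r s.
have := congr1 (fun X : 'M[F]_n => X r s) H; rewrite !mxE => <-.
have E1 : forall L : {set 'I_M}, \sum_(j < #|L|) subcols Psi L r j * adj (subcols Psi L) j s
    = \sum_(i in L) Psi r i * adj Psi i s.
  move=> L; rewrite [RHS]big_enum_val; apply: eq_bigr => i _.
  by rewrite adjE subcolsE adjE subcolsE.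
rewrite !E1 [in RHS](bigID (fun x => x \in K)) /=.
have -> : \sum_(i in ~: K) Psi r i * adj Psi i s = \sum_(i | i \notin K) Psi r i * adj Psi i s.
  by apply: eq_bigl => i; rewrite in_setC.
by rewrite addrAC subrr add0r.
Qed.

Lemma vol_covol N M (Phi : 'M[F]_(N,M)) (Psi : 'M[F]_(M-N, M)) K :
  parseval conj Psi -> naimark_compl conj Phi Psi ->
  vol conj sq (subcols Phi K) = covol conj sq (subcols Psi (~: K)).
Proof.
move=> HP HN; rewrite /vol /covol (key_gram _ HN) key_cogram //.
by rewrite det_sylv.
Qed.

Lemma V_CV k N M (Phi : 'M[F]_(N,M)) (Psi : 'M[F]_(M-N, M)) :
  (k <= M)%N -> parseval conj Psi -> naimark_compl conj Phi Psi ->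
  Vk conj sq k Phi = CVk conj sq (M - k) Psi.
Proof.
move=> kM HP HN; rewrite /Vk /CVk (reindex_inj (@setC_inj _)) /=.
apply: eq_big => K.
  have h : (#|K| <= M)%N by rewrite -[X in (_ <= X)%N]card_ord max_card.
  rewrite cardsCs setCK card_ord; apply/eqP/eqP => [<-|->]; rewrite subKn //.
by move=> _; rewrite (vol_covol _ HP HN) setCK.
Qed.

Lemma unit_orth p M (P : 'M[F]_(p, M)) : (p < M)%N ->
  exists w : 'rV[F]_M, w *m adj w = 1%:M /\ w *m adj P = 0.
Proof.
move=> pM.
have : kermx (adj P) != 0.
  rewrite -mxrank_eq0 mxrank_ker; have := rank_leq_col (adj P).
  move=> h; rewrite subn_eq0 -ltnNge; exact: leq_ltn_trans h pM.
case/rowV0Pn => u /sub_kermxP uP u0.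
set s := (u *m adj u) 0 0.
have sE : s = \sum_j u 0 j * conj (u 0 j).
  by rewrite /s mxE; apply: eq_bigr => j _; rewrite adjE.
have s_pos : 0 < s.
  rewrite lt0r sE sumr_ge0 ?andbT; last by move=> j _; apply: conj_ge0.
  apply/eqP => /psumr_eq0P h; case/eqP: u0; apply/rowP => j; rewrite mxE.
  by apply: conj_eq0; apply: h => // i _; apply: conj_ge0.
have [c hc] : exists c, c * conj c = s^-1.
  by apply: conj_norm; rewrite invr_gt0.
exists (c *: u); split.
  rewrite adjZ -scalemxAl -scalemxAr scalerA hc [u *m adj u]mx11_scalar -/s.
  by rewrite scale_scalar_mx mulVf // gt_eqF.
by rewrite -scalemxAl uP scaler0.
Qed.

Lemma adj_swap m n p (A : 'M[F]_(m, n)) (B : 'M[F]_(p, n)) :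
  B *m adj A = adj (A *m adj B).
Proof. by rewrite adjM adjK. Qed.

Lemma complete q : forall p M (P : 'M[F]_(p, M)), (p + q)%N = M ->
  P *m adj P = 1%:M ->
  exists Q : 'M[F]_(q, M), Q *m adj Q = 1%:M /\ adj Q *m Q = 1%:M - adj P *m P.
Proof.
elim: q => [|q IH] p M P e PP.
  rewrite addn0 in e; subst M.
  exists 0; split; first by rewrite [LHS]flatmx0 [RHS]flatmx0.
  by rewrite (mulmx1C PP) subrr mulmx0.
have pM : (p < M)%N by lia.
have [w [ww wP]] := unit_orth P pM.
pose P' := col_mx P w.
have e' : (p + 1 + q)%N = M by lia.
have Pw : P *m adj w = 0 by rewrite adj_swap wP adj0.
have PP' : P' *m adj P' = 1%:M.
  by rewrite /P' adj_col mul_col_row PP ww wP Pw -scalar_mx_block.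
have [Q [QQ QP]] := IH _ _ P' e' PP'.
have AP' : adj P' *m P' = adj P *m P + adj w *m w by rewrite /P' adj_col mul_row_col.
have wQ : w *m adj Q = 0.
  have h1 : w *m adj Q *m Q = 0.
    by rewrite -mulmxA QP AP' mulmxBr mulmx1 mulmxDr !mulmxA wP mul0mx add0r ww mul1mx subrr.
  by rewrite -[w *m adj Q]mulmx1 -QQ mulmxA h1 mul0mx.
have Qw : Q *m adj w = 0 by rewrite adj_swap wQ adj0.
exists (col_mx w Q : 'M_(q.+1, M)); split.
  change (col_mx w Q *m adj (col_mx w Q) = (1%:M : 'M[F]_(1 + q))).
  by rewrite adj_col mul_col_row ww QQ wQ Qw -scalar_mx_block.
change (adj (col_mx w Q) *m (col_mx w Q) = 1%:M - adj P *m P).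
by rewrite adj_col mul_row_col QP AP' addrC opprD addrA subrK.
Qed.

Lemma prop14_gen : prop14_for conj sq.
Proof.
move=> k N M k1 kN NM Phi Psi HPhi HPsi HN.
have kM : (k <= M)%N by lia.
split.
- case=> _ Hmax; split => // Psi' HPsi'.
  have e : (M - N + N)%N = M by lia.
  have [Q [QQ QP]] := complete e HPsi'.
  have HN' : naimark_compl conj Q Psi'.
    by rewrite /naimark_compl QP opprB addrC subrK.
  rewrite -(V_CV kM HPsi' HN') -(V_CV kM HPsi HN); exact: Hmax.
- case=> _ Hmax; split => // Phi' HPhi'.
  have e : (N + (M - N))%N = M by lia.
  have [Q [QQ QP]] := complete e HPhi'.
  rewrite (V_CV kM QQ QP) (V_CV kM HPsi HN); exact: Hmax.
Qed.

End Gen.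

Theorem proposition14 (R : realType) :
  prop14_for (F := R) id Num.sqrt /\
  prop14_for (F := R[i]) Num.conj sqrtC.
Proof.
split.
  apply: (@prop14_gen _ id Num.sqrt).
  - by [].
  - by [].
  - by [].
  - by [].
  - by move=> x; rewrite -expr2 sqr_ge0.
  - by move=> x /eqP; rewrite mulf_eq0 orbb => /eqP.
  - move=> r r0; exists (Num.sqrt r); rewrite -expr2 sqr_sqrtr.
      by [].
    exact: ltW.
apply: (@prop14_gen _ Num.conj sqrtC).
- by move=> x y; rewrite rmorphD.
- by move=> x y; rewrite rmorphM.
- exact: conjCK.
- exact: conjC0.
- by move=> x; rewrite -normCK exprn_ge0.
- by move=> x /eqP; rewrite -normCK expf_eq0 /= normr_eq0 => /eqP.
- move=> r r0; exists (sqrtC r).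
  have h : 0 <= sqrtC r by rewrite sqrtC_ge0; exact: ltW.
  by rewrite (geC0_conj h) -expr2 sqrtCK.
Qed.
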